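(* Let $H\subseteq G$ be simple groups, and assume $G$ is co-hopfian. Then the inclusion $H\subseteq G$ is a localization if and only if the following three conditions hold: (1) there is an injective homomorphism $j\colon\mathrm{Aut}(H)\to\mathrm{Aut}(G)$ with $j(c_h)=c_h^{G}$ for all $h\in H$; (2) for every subgroup $K\subseteq G$ isomorphic to $H$ there is $\beta\in\mathrm{Aut}(G)$ with $\beta(K)=H$; (3) the only automorphism of $G$ whose restriction to $H$ is the identity of $H$ is $\mathrm{id}_G$ (i.e. the centralizer of $H$ in $\mathrm{Aut}(G)$ is trivial).
   Context: A group homomorphism $i\colon H\to G$ is a localization if for every homomorphism $\varphi\colon H\to G$ there exists a unique homomorphism $\psi\colon G\to G$ with $\psi\circ i=\varphi$; for $H\subseteq G$, ''$H\subseteq G$ is a localization'' means the inclusion map is a localization. A group is co-hopfian if every injective endomorphism of it is an automorphism. For a group $X$ and $x\in X$, $c_x$ denotes the inner automorphism $y\mapsto x^{-1}yx$ of $X$. For $H\subseteq G$ and $h\in H$, $c_h$ denotes conjugation by $h$ on $H$ and $c_h^{G}$ denotes conjugation by $h$ on $G$. *)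

(* Defs.v *)
From Stdlib Require Import Classical FunctionalExtensionality.

Record group := Group {
  carrier :> Type;
  gmul : carrier -> carrier -> carrier;
  gone : carrier;
  ginv : carrier -> carrier;
  gmulA : forall x y z, gmul x (gmul y z) = gmul (gmul x y) z;
  gmul1x : forall x, gmul gone x = x;
  gmulx1 : forall x, gmul x gone = x;
  gmulVx : forall x, gmul (ginv x) x = gone;
  gmulxV : forall x, gmul x (ginv x) = gone
}.

Arguments gmul {g}.
Arguments gone {g}.
Arguments ginv {g}.

Definition is_hom {G H : group} (f : G -> H) : Prop :=
  forall x y : G, f (gmul x y) = gmul (f x) (f y).

Definition injective {A B : Type} (f : A -> B) : Prop :=
  forall x y, f x = f y -> x = y.

Definition surjective {A B : Type} (f : A -> B) : Prop :=
  forall y, exists x, f x = y.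

Definition is_aut {G : group} (f : G -> G) : Prop :=
  is_hom f /\ injective f /\ surjective f.

Definition is_subgroup {G : group} (K : G -> Prop) : Prop :=
  K gone /\ (forall x y, K x -> K y -> K (gmul x y)) /\ (forall x, K x -> K (ginv x)).

Definition is_normal {G : group} (N : G -> Prop) : Prop :=
  is_subgroup N /\ forall x g : G, N x -> N (gmul (ginv g) (gmul x g)).

Definition simple (G : group) : Prop :=
  (exists x : G, x <> gone) /\
  forall N : G -> Prop, is_normal N ->
    (forall x, N x -> x = gone) \/ (forall x, N x).

Definition cohopfian (G : group) : Prop :=
  forall f : G -> G, is_hom f -> injective f -> is_aut f.

Definition conj {G : group} (x : G) : G -> G := fun y => gmul (ginv x) (gmul y x).

Definition localization {H G : group} (i : H -> G) : Prop :=
  forall phi : H -> G, is_hom phi ->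
    exists psi : G -> G, is_hom psi /\ (forall h, psi (i h) = phi h) /\
      forall psi' : G -> G, is_hom psi' -> (forall h, psi' (i h) = phi h) -> psi' = psi.

Definition image_pred {G : group} (b : G -> G) (K : G -> Prop) : G -> Prop :=
  fun y => exists x, K x /\ b x = y.
Definition range {A B : Type} (f : A -> B) : B -> Prop :=
  fun y => exists x, f x = y.

(* Main.v *)
Require Import Defs.
From Stdlib Require Import Classical ClassicalEpsilon FunctionalExtensionality.

Lemma mulKl (G:group) (a x : G) : gmul (ginv a) (gmul a x) = x.
Proof. rewrite gmulA, gmulVx, gmul1x; reflexivity. Qed.
Lemma mulKr (G:group) (a x : G) : gmul a (gmul (ginv a) x) = x.
Proof. rewrite gmulA, gmulxV, gmul1x; reflexivity. Qed.
Lemma mulKr' (G:group) (x a : G) : gmul (gmul x a) (ginv a) = x.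
Proof. rewrite <- gmulA, gmulxV, gmulx1; reflexivity. Qed.
Lemma mulKr'' (G:group) (x a : G) : gmul (gmul x (ginv a)) a = x.
Proof. rewrite <- gmulA, gmulVx, gmulx1; reflexivity. Qed.
Lemma lcancel (G:group) (a x y : G) : gmul a x = gmul a y -> x = y.
Proof. intro E; rewrite <- (mulKl G a x), <- (mulKl G a y), E; reflexivity. Qed.
Lemma rcancel (G:group) (a x y : G) : gmul x a = gmul y a -> x = y.
Proof. intro E; rewrite <- (mulKr' G x a), <- (mulKr' G y a), E; reflexivity. Qed.
Lemma inv_uniq (G:group) (x y : G) : gmul x y = gone -> y = ginv x.
Proof. intro E; apply (lcancel G x); rewrite gmulxV; exact E. Qed.
Lemma inv_one (G:group) : ginv (@gone G) = gone.
Proof. symmetry; apply inv_uniq; apply gmul1x. Qed.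
Lemma eq_of_mul_inv (G:group) (x y : G) : gmul x (ginv y) = gone -> x = y.
Proof. intro E; rewrite <- (mulKr'' G x y), E, gmul1x; reflexivity. Qed.

Lemma hom_one {G K : group} (f : G -> K) : is_hom f -> f gone = gone.
Proof. intro Hf. apply (lcancel K (f gone)). rewrite <- Hf, gmul1x, gmulx1; reflexivity. Qed.
Lemma hom_inv {G K : group} (f : G -> K) x : is_hom f -> f (ginv x) = ginv (f x).
Proof. intro Hf. apply inv_uniq. rewrite <- Hf, gmulxV. apply hom_one; exact Hf. Qed.
Lemma hom_comp {G K L : group} (f : G -> K) (g : K -> L) :
  is_hom f -> is_hom g -> is_hom (fun x => g (f x)).
Proof. intros Hf Hg x y; rewrite Hf, Hg; reflexivity. Qed.
Lemma aut_comp {G : group} (f g : G -> G) : is_aut f -> is_aut g -> is_aut (fun x => g (f x)).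
Proof.
  intros [Hf [If Sf]] [Hg [Ig Sg]]. split; [apply hom_comp; auto|split].
  - intros x y E; apply If, Ig, E.
  - intro y. destruct (Sg y) as [z Hz]. destruct (Sf z) as [x Hx]. exists x. subst; reflexivity.
Qed.

Lemma ker_normal {G K : group} (f : G -> K) : is_hom f -> is_normal (fun x => f x = gone).
Proof.
  intro Hf. split; [split; [|split]|].
  - apply hom_one; auto.
  - intros x y Ex Ey. rewrite Hf, Ex, Ey, gmul1x; reflexivity.
  - intros x Ex. rewrite hom_inv, Ex, inv_one; auto.
  - intros x g Ex. rewrite Hf, Hf, Ex, gmul1x, <- Hf, gmulVx. apply hom_one; auto.
Qed.

Lemma simple_hom {G K : group} (f : G -> K) : simple G -> is_hom f ->
  injective f \/ (forall x, f x = gone).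
Proof.
  intros [_ sG] Hf. destruct (sG _ (ker_normal f Hf)) as [T|A].
  - left. intros x y E. apply eq_of_mul_inv. apply T. rewrite Hf, hom_inv, E, gmulxV; auto.
  - right; auto.
Qed.

Lemma range_subgroup {G K : group} (f : G -> K) : is_hom f -> is_subgroup (range f).
Proof.
  intro Hf. split; [|split].
  - exists gone. apply hom_one; auto.
  - intros x y [a Ha] [b Hb]. exists (gmul a b). rewrite Hf; subst; reflexivity.
  - intros x [a Ha]. exists (ginv a). rewrite hom_inv; subst; auto.
Qed.

Lemma conj_aut (G : group) (x : G) : is_aut (conj x).
Proof.
  unfold conj. split; [|split].
  - intros a b. repeat rewrite <- gmulA. rewrite mulKr. reflexivity.
  - intros a b E. apply (lcancel G (ginv x)) in E. apply (rcancel G x) in E. exact E.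
  - intro y. exists (gmul x (gmul y (ginv x))). repeat rewrite <- gmulA.
    rewrite mulKl, gmulVx, gmulx1; reflexivity.
Qed.

Lemma aut_inv {G : group} (f : G -> G) : is_aut f ->
  exists g, is_aut g /\ (forall x, g (f x) = x) /\ (forall y, f (g y) = y).
Proof.
  intros [Hh [Hi Hs]].
  exists (fun y => proj1_sig (constructive_indefinite_description _ (Hs y))).
  set (g := fun y => proj1_sig (constructive_indefinite_description _ (Hs y))).
  assert (fg : forall y, f (g y) = y).
  { intro y. unfold g. exact (proj2_sig (constructive_indefinite_description _ (Hs y))). }
  assert (gf : forall x, g (f x) = x). { intro x. apply Hi. rewrite fg; auto. }
  split; [split; [|split]|split]; auto.
  - intros a b. apply Hi. rewrite Hh, !fg; auto.
  - intros a b E. rewrite <- (fg a), <- (fg b), E; auto.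
  - intro x. exists (f x). auto.
Qed.

Lemma nontriv {H G : group} (f : H -> G) : simple H -> is_hom f -> injective f ->
  exists h, f h <> gone.
Proof.
  intros [[x Hx] _] Hf If. exists x. intro E. apply Hx. apply If. rewrite E, hom_one; auto.
Qed.

Lemma ext_aut {H G : group} (i f : H -> G) (psi : G -> G) :
  simple H -> simple G -> cohopfian G -> is_hom f -> injective f -> is_hom psi ->
  (forall h, psi (i h) = f h) -> is_aut psi.
Proof.
  intros sH sG coG Hf If Hp E.
  destruct (simple_hom psi sG Hp) as [Inj|K].
  - apply coG; auto.
  - exfalso. destruct (nontriv f sH Hf If) as [h Hh]. apply Hh. rewrite <- E. apply K.
Qed.

Lemma central_of_conj (G : group) (u v : G) :
  (forall y, conj u y = conj v y) -> forall y, gmul (gmul v (ginv u)) y = gmul y (gmul v (ginv u)).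
Proof.
  intros E y. specialize (E y). unfold conj in E.
  apply (f_equal (fun t => gmul v (gmul t (ginv u)))) in E.
  repeat rewrite <- gmulA in E. rewrite mulKr, gmulxV, gmulx1 in E.
  repeat rewrite <- gmulA. exact E.
Qed.

Lemma loc_ext {H G : group} (i : H -> G) : localization i ->
  exists E : (H -> G) -> (G -> G), forall phi, is_hom phi ->
    is_hom (E phi) /\ forall h, E phi (i h) = phi h.
Proof.
  intro L.
  exists (fun phi => match excluded_middle_informative (is_hom phi) with
    | left Hp => proj1_sig (constructive_indefinite_description _ (L phi Hp))
    | right _ => fun y => y end).
  intros phi Hp. destruct (excluded_middle_informative (is_hom phi)) as [Hp'|n]; [|contradiction].
  pose proof (proj2_sig (constructive_indefinite_description _ (L phi Hp'))) as [P1 [P2 _]]. auto.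
Qed.

Lemma loc_uniq {H G : group} (i : H -> G) (phi : H -> G) (p1 p2 : G -> G) :
  localization i -> is_hom phi -> is_hom p1 -> is_hom p2 ->
  (forall h, p1 (i h) = phi h) -> (forall h, p2 (i h) = phi h) -> p1 = p2.
Proof.
  intros L Hp H1 H2 E1 E2. destruct (L phi Hp) as [psi [_ [_ U]]].
  rewrite (U p1), (U p2); auto.
Qed.

Lemma forward (H G : group) (i : H -> G)
  (i_hom : is_hom i) (i_inj : injective i)
  (simpleH : simple H) (simpleG : simple G) (coG : cohopfian G) :
  localization i ->
  ( (exists j : (H -> H) -> (G -> G),
       (forall a, is_aut a -> is_aut (j a)) /\
       (forall a b, is_aut a -> is_aut b ->
          j (fun x => a (b x)) = (fun y => j a (j b y))) /\
       (forall a b, is_aut a -> is_aut b -> j a = j b -> a = b) /\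
       (forall h : H, j (conj h) = conj (i h)))
    /\
    (forall K : G -> Prop, is_subgroup K ->
       (exists f : H -> G, is_hom f /\ injective f /\ (forall y, K y <-> range f y)) ->
       exists beta : G -> G, is_aut beta /\
         (forall y, image_pred beta K y <-> range i y))
    /\
    (forall beta : G -> G, is_aut beta -> (forall h, beta (i h) = i h) ->
       forall x, beta x = x) ).
Proof.
  intro L. destruct (loc_ext i L) as [E HE].
  split; [|split].
  - exists (fun a => E (fun h => i (a h))). split; [|split; [|split]].
    + intros a [Ha [Ia _]].
      assert (Hc : is_hom (fun h => i (a h))) by (apply hom_comp; auto).
      destruct (HE _ Hc) as [P1 P2].
      apply (ext_aut i (fun h => i (a h))); auto.
      intros x y Ex; apply Ia, i_inj, Ex.
    + intros a b [Ha _] [Hb _].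
      assert (Hca : is_hom (fun h => i (a h))) by (apply hom_comp; auto).
      assert (Hcb : is_hom (fun h => i (b h))) by (apply hom_comp; auto).
      assert (Hcab : is_hom (fun h => i (a (b h)))) by (apply hom_comp; [apply hom_comp|]; auto).
      destruct (HE _ Hca) as [A1 A2]. destruct (HE _ Hcb) as [B1 B2].
      destruct (HE _ Hcab) as [C1 C2].
      apply (loc_uniq i (fun h => i (a (b h)))); auto.
      * apply hom_comp; auto.
      * intro h. rewrite B2, A2. reflexivity.
    + intros a b [Ha _] [Hb _] Eq. extensionality x. apply i_inj.
      assert (Hca : is_hom (fun h => i (a h))) by (apply hom_comp; auto).
      assert (Hcb : is_hom (fun h => i (b h))) by (apply hom_comp; auto).
      destruct (HE _ Hca) as [A1 A2]. destruct (HE _ Hcb) as [B1 B2].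
      rewrite <- A2, <- B2, Eq. reflexivity.
    + intro h. destruct (conj_aut H h) as [Hch _]. destruct (conj_aut G (i h)) as [Hcih _].
      assert (Hc : is_hom (fun x => i (conj h x))) by (apply hom_comp; auto).
      destruct (HE _ Hc) as [C1 C2].
      apply (loc_uniq i (fun x => i (conj h x))); auto.
      intro x. unfold conj. rewrite !i_hom, hom_inv; auto.
  - intros K HK [f [Hf [Fi Fr]]]. destruct (HE f Hf) as [Hp Pe].
    assert (Ap : is_aut (E f)) by (apply (ext_aut i f); auto).
    destruct (aut_inv _ Ap) as [b [Hb [bp pb]]]. exists b. split; auto.
    intro y; split.
    + intros [x [Kx bx]]. apply Fr in Kx. destruct Kx as [h fh]. subst. exists h.
      rewrite <- Pe, bp. reflexivity.
    + intros [h ih]. subst. exists (f h). split.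
      * apply Fr. exists h; auto.
      * rewrite <- Pe, bp. reflexivity.
  - intros beta [Hb _] Fix x.
    assert (Eq : beta = fun y => y).
    { apply (loc_uniq i i); auto. intros a b; reflexivity. }
    rewrite Eq; reflexivity.
Qed.

Lemma ext_unique (H G : group) (i : H -> G)
  (i_hom : is_hom i) (i_inj : injective i)
  (simpleH : simple H) (simpleG : simple G) (coG : cohopfian G)
  (C3 : forall beta : G -> G, is_aut beta -> (forall h, beta (i h) = i h) ->
       forall x, beta x = x)
  (phi : H -> G) (p1 p2 : G -> G) :
  is_hom phi -> is_hom p1 -> is_hom p2 ->
  (forall h, p1 (i h) = phi h) -> (forall h, p2 (i h) = phi h) -> p1 = p2.
Proof.
  intros Hp H1 H2 E1 E2.
  destruct (simple_hom phi simpleH Hp) as [Ip|Tp].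
  - assert (A1 : is_aut p1) by (apply (ext_aut i phi); auto).
    assert (A2 : is_aut p2) by (apply (ext_aut i phi); auto).
    destruct (aut_inv _ A2) as [g [Ag [gp pg]]].
    assert (Fx := C3 _ (aut_comp _ _ A1 Ag)). simpl in Fx.
    assert (Fx' : forall x, g (p1 x) = x).
    { apply Fx. intro h. rewrite E1, <- E2. apply gp. }
    extensionality x. rewrite <- (Fx' x) at 2. rewrite pg. reflexivity.
  - assert (K : forall p : G -> G, is_hom p -> (forall h, p (i h) = phi h) -> forall x, p x = gone).
    { intros p Hq Eq. destruct (simple_hom p simpleG Hq) as [Iq|Kq]; auto.
      exfalso. destruct (nontriv i simpleH i_hom i_inj) as [h Hh]. apply Hh.
      apply Iq. rewrite Eq, Tp, hom_one; auto. }
    extensionality x. rewrite (K p1), (K p2); auto.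
Qed.

Lemma backward (H G : group) (i : H -> G)
  (i_hom : is_hom i) (i_inj : injective i)
  (simpleH : simple H) (simpleG : simple G) (coG : cohopfian G) :
  ( (exists j : (H -> H) -> (G -> G),
       (forall a, is_aut a -> is_aut (j a)) /\
       (forall a b, is_aut a -> is_aut b ->
          j (fun x => a (b x)) = (fun y => j a (j b y))) /\
       (forall a b, is_aut a -> is_aut b -> j a = j b -> a = b) /\
       (forall h : H, j (conj h) = conj (i h)))
    /\
    (forall K : G -> Prop, is_subgroup K ->
       (exists f : H -> G, is_hom f /\ injective f /\ (forall y, K y <-> range f y)) ->
       exists beta : G -> G, is_aut beta /\
         (forall y, image_pred beta K y <-> range i y))
    /\
    (forall beta : G -> G, is_aut beta -> (forall h, beta (i h) = i h) ->
       forall x, beta x = x) ) -> localization i.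
Proof.
  intros [[j [J1 [J2 [J3 J4]]]] [C2 C3]] phi Hphi.
  assert (Ex : exists psi : G -> G, is_hom psi /\ forall h, psi (i h) = phi h).
  2:{ destruct Ex as [psi [Hpsi Epsi]]. exists psi. split; [|split]; auto.
      intros psi' Hpsi' Epsi'. apply (ext_unique H G i i_hom i_inj simpleH simpleG coG C3 phi); auto. }
  destruct (simple_hom phi simpleH Hphi) as [Ip|Tp].
  2:{ exists (fun _ => gone). split.
      - intros x y. rewrite gmul1x; reflexivity.
      - intro h. rewrite Tp; reflexivity. }
  set (Z := fun z : G => forall g, gmul z g = gmul g z).
  assert (NZ : is_normal Z).
  { split; [split; [|split]|].
    - intro g. rewrite gmul1x, gmulx1; reflexivity.
    - intros x y Zx Zy g. rewrite <- gmulA, Zy, gmulA, Zx, gmulA. reflexivity.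
    - intros x Zx g. apply (lcancel G x). rewrite mulKr, gmulA, Zx, mulKr'. reflexivity.
    - intros x g Zx h. rewrite (Zx g), mulKl. apply Zx. }
  destruct (proj2 simpleG Z NZ) as [Ztriv|Zall].
  -
    assert (Kr : is_subgroup (range phi)) by (apply range_subgroup; auto).
    destruct (C2 (range phi) Kr (ex_intro _ phi (Logic.conj Hphi (Logic.conj Ip (fun y => iff_refl _)))))
      as [beta [Abeta Hbeta]].
    assert (Ea : forall h, exists h', i h' = beta (phi h)).
    { intro h. apply (proj1 (Hbeta (beta (phi h)))). exists (phi h). split; auto.
      exists h; reflexivity. }
    set (a := fun h => proj1_sig (constructive_indefinite_description _ (Ea h))).
    assert (ia : forall h, i (a h) = beta (phi h)).
    { intro h. exact (proj2_sig (constructive_indefinite_description _ (Ea h))). }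
    destruct Abeta as [Hb [Ib Sb]].
    assert (Aa : is_aut a).
    { split; [|split].
      - intros x y. apply i_inj. rewrite i_hom, !ia, Hphi, Hb. reflexivity.
      - intros x y E. apply Ip, Ib. rewrite <- !ia, E. reflexivity.
      - intro h'. destruct (proj2 (Hbeta (i h')) (ex_intro _ h' eq_refl)) as [x [[h Kx] bx]].
        exists h. apply i_inj. rewrite ia, Kx. exact bx. }
    set (g := j a).
    assert (Ag : is_aut g) by (apply J1; auto).
    destruct Ag as [Hg [Ig Sg]].
    assert (Key : forall h, g (i h) = i (a h)).
    { intro h.
      assert (E1 : (fun x => conj (a h) (a x)) = (fun x => a (conj h x))).
      { extensionality x. unfold conj. destruct Aa as [Ha _]. rewrite !Ha, hom_inv; auto. }
      assert (E2 := J2 (conj (a h)) a (conj_aut H (a h)) Aa).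
      assert (E3 := J2 a (conj h) Aa (conj_aut H h)).
      rewrite E1, E3, J4, J4 in E2. fold g in E2.
      assert (Cc : forall y, conj (i (a h)) y = conj (g (i h)) y).
      { intro y. destruct (Sg y) as [x Hx]. subst y.
        assert (E4 := f_equal (fun F => F x) E2). simpl in E4. rewrite <- E4.
        unfold conj. rewrite !Hg, hom_inv; auto. }
      apply eq_of_mul_inv. apply Ztriv. intro y. apply central_of_conj. exact Cc. }
    destruct (aut_inv beta (Logic.conj Hb (Logic.conj Ib Sb))) as [binv [[Hbi _] [bib bbi]]].
    exists (fun y => binv (g y)). split.
    + apply hom_comp; auto.
    + intro h. rewrite Key, ia, bib. reflexivity.
  -
    assert (Nr : is_normal (range i)).
    { split. apply range_subgroup; auto.
      intros x g' Rx. rewrite (Zall x g'), mulKl. exact Rx. }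
    destruct (proj2 simpleG _ Nr) as [Rt|Ra].
    + exfalso. destruct (nontriv i simpleH i_hom i_inj) as [h Hh]. apply Hh, Rt. exists h; auto.
    + set (iinv := fun y => proj1_sig (constructive_indefinite_description _ (Ra y))).
      assert (iiv : forall y, i (iinv y) = y).
      { intro y. exact (proj2_sig (constructive_indefinite_description _ (Ra y))). }
      exists (fun y => phi (iinv y)). split.
      * intros x y. rewrite <- Hphi. f_equal. apply i_inj. rewrite i_hom, !iiv. reflexivity.
      * intro h. f_equal. apply i_inj. rewrite iiv. reflexivity.
Qed.
Theorem theorem2p3 (H G : group) (i : H -> G)
  (i_hom : is_hom i) (i_inj : injective i)
  (simpleH : simple H) (simpleG : simple G) (coG : cohopfian G) :
  localization i <->
  ( (* (1) injective hom j : Aut(H) -> Aut(G) with j(c_h) = c_(i h)^G *)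
    (exists j : (H -> H) -> (G -> G),
       (forall a, is_aut a -> is_aut (j a)) /\
       (forall a b, is_aut a -> is_aut b ->
          j (fun x => a (b x)) = (fun y => j a (j b y))) /\
       (forall a b, is_aut a -> is_aut b -> j a = j b -> a = b) /\
       (forall h : H, j (conj h) = conj (i h)))
    /\
    (* (2) every subgroup K of G isomorphic to H is moved onto H by an automorphism *)
    (forall K : G -> Prop, is_subgroup K ->
       (exists f : H -> G, is_hom f /\ injective f /\ (forall y, K y <-> range f y)) ->
       exists beta : G -> G, is_aut beta /\
         (forall y, image_pred beta K y <-> range i y))
    /\
    (* (3) the only automorphism of G fixing H pointwise is the identity *)
    (forall beta : G -> G, is_aut beta -> (forall h, beta (i h) = i h) ->
       forall x, beta x = x) ).
Proof.
  split; [apply forward | apply backward]; auto.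
Qed.
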